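(* Consider the network SIS system $\dot x = (-D+B-XB)x$ on $\Xi_n$, where $B$ is irreducible, and suppose $\phi:=s(-D+B)>0$. Let $y\in\mathbb{R}^n$, $y>0$ (entrywise), satisfy $(-D+B)y=\phi y$ with $\max_i y_i=1$. For $\epsilon\in(0,1)$ define $\mathcal{M}_\epsilon=\{x\in\mathbb{R}^n:\ \epsilon y_i\le x_i\le 1\ \forall i\}$, with faces $P_i=\{x: x_i=\epsilon y_i,\ x_j\in[\epsilon y_j,1]\ \forall j\ne i\}$ and $Q_i=\{x: x_i=1,\ x_j\in[\epsilon y_j,1]\ \forall j\ne i\}$. Then there exists $\epsilon>0$ sufficiently small such that: (i) both $\mathcal{M}_\epsilon$ and its interior are positively invariant for the system; (ii) for each $i=1,\dots,n$, $-\dot x_i<0$ for all $x\in P_i$ and $\dot x_i<0$ for all $x\in Q_i$; (iii) for every $x(0)\in\partial\Xi_n\setminus\{0_n\}$ there is a finite $\bar\kappa>0$ with $x(\bar\kappa)\in\mathcal{M}_\epsilon$; and (iv) every equilibrium $x\in\Xi_n\setminus\{0_n\}$ of the system satisfies $x\in\operatorname{int}(\mathcal{M}_\epsilon)$.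
   Context: Network SIS model: $n\ge2$, $D=\operatorname{diag}(d_1,\dots,d_n)$ with $d_i>0$, $B=(b_{ij})\in\mathbb{R}^{n\times n}$ entrywise nonnegative, $X=\operatorname{diag}(x_1,\dots,x_n)$; componentwise $\dot x_i=-d_ix_i+(1-x_i)\sum_j b_{ij}x_j$. $B$ irreducible is equivalent to the associated directed graph (edge from $j$ to $i$ iff $b_{ij}\neq 0$) being strongly connected. $\Xi_n=\{x\in\mathbb{R}^n: 0\le x_i\le 1\ \forall i\}$; $\partial\Xi_n$ is its boundary. For a square matrix $M$, $s(M)$ is the largest real part of its eigenvalues. Vector inequalities are entrywise. *)

(* Defs.v *)
From Stdlib Require Import Reals Lra.
Open Scope R_scope.

(* Vectors of R^n are functions nat -> R (only indices < n matter);
   n x n matrices are functions nat -> nat -> R. *)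

Fixpoint rsum (n : nat) (f : nat -> R) : R :=
  match n with
  | O => 0
  | S m => rsum m f + f m
  end.

Definition mat_vec (n : nat) (M : nat -> nat -> R) (v : nat -> R) (i : nat) : R :=
  rsum n (fun j => M i j * v j).

Definition minusD_plus_B (d : nat -> R) (B : nat -> nat -> R) : nat -> nat -> R :=
  fun i j => B i j - (if Nat.eqb i j then d i else 0).

(* a + i b is a (complex) eigenvalue of the real n x n matrix M:
   there is a nonzero complex vector u + i v with M (u + i v) = (a + i b)(u + i v). *)
Definition is_eigenvalue_C (n : nat) (M : nat -> nat -> R) (a b : R) : Prop :=
  exists u v : nat -> R,
    (exists i, (i < n)%nat /\ (u i <> 0 \/ v i <> 0)) /\
    (forall i, (i < n)%nat -> mat_vec n M u i = a * u i - b * v i) /\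
    (forall i, (i < n)%nat -> mat_vec n M v i = b * u i + a * v i).

Definition spectral_abscissa (n : nat) (M : nat -> nat -> R) (s : R) : Prop :=
  (exists b, is_eigenvalue_C n M s b) /\
  (forall a b, is_eigenvalue_C n M a b -> a <= s).

(* directed graph of B: edge from j to i iff b_ij <> 0; reach j i = directed path j ~> i *)
Inductive reach (n : nat) (B : nat -> nat -> R) : nat -> nat -> Prop :=
  | reach_edge : forall j i, (j < n)%nat -> (i < n)%nat -> B i j <> 0 -> reach n B j i
  | reach_trans : forall j k i, reach n B j k -> reach n B k i -> reach n B j i.

(* B irreducible <-> its graph is strongly connected *)
Definition irreducible (n : nat) (B : nat -> nat -> R) : Prop :=
  forall i j, (i < n)%nat -> (j < n)%nat -> i <> j -> reach n B j i.

Definition sis_field (n : nat) (d : nat -> R) (B : nat -> nat -> R) (x : nat -> R) (i : nat) : R :=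
  - d i * x i + (1 - x i) * rsum n (fun j => B i j * x j).

Definition is_solution (n : nat) (d : nat -> R) (B : nat -> nat -> R) (x : R -> nat -> R) : Prop :=
  forall t, 0 <= t -> forall i, (i < n)%nat ->
    derivable_pt_lim (fun s => x s i) t (sis_field n d B (x t) i).

Definition in_Xi (n : nat) (x : nat -> R) : Prop :=
  forall i, (i < n)%nat -> 0 <= x i <= 1.

Definition in_boundary_Xi (n : nat) (x : nat -> R) : Prop :=
  in_Xi n x /\ exists i, (i < n)%nat /\ (x i = 0 \/ x i = 1).

Definition is_zero_vec (n : nat) (x : nat -> R) : Prop :=
  forall i, (i < n)%nat -> x i = 0.

Definition in_M (n : nat) (eps : R) (y x : nat -> R) : Prop :=
  forall i, (i < n)%nat -> eps * y i <= x i <= 1.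

Definition in_int_M (n : nat) (eps : R) (y x : nat -> R) : Prop :=
  forall i, (i < n)%nat -> eps * y i < x i < 1.

Definition in_P (n : nat) (eps : R) (y : nat -> R) (i : nat) (x : nat -> R) : Prop :=
  x i = eps * y i /\ forall j, (j < n)%nat -> j <> i -> eps * y j <= x j <= 1.

Definition in_Q (n : nat) (eps : R) (y : nat -> R) (i : nat) (x : nat -> R) : Prop :=
  x i = 1 /\ forall j, (j < n)%nat -> j <> i -> eps * y j <= x j <= 1.

Definition pos_invariant (n : nat) (d : nat -> R) (B : nat -> nat -> R) (S : (nat -> R) -> Prop) : Prop :=
  forall x : R -> nat -> R, is_solution n d B x -> S (x 0) -> forall t, 0 <= t -> S (x t).

(* Main.v *)
Require Import Defs.
From Stdlib Require Import Reals Lra Lia Classical.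
Open Scope R_scope.

Lemma rsum_le n f g : (forall j, (j < n)%nat -> f j <= g j) -> rsum n f <= rsum n g.
Proof. induction n; simpl; intros H. lra. assert (f n <= g n) by (apply H; lia).
  assert (rsum n f <= rsum n g) by (apply IHn; intros; apply H; lia). lra. Qed.

Lemma rsum_nonneg n f : (forall j, (j < n)%nat -> 0 <= f j) -> 0 <= rsum n f.
Proof. intros H. replace 0 with (rsum n (fun _ => 0)). apply rsum_le; auto.
  clear H; induction n; simpl; [lra|rewrite IHn; lra]. Qed.

Lemma rsum_term n f k : (forall j, (j < n)%nat -> 0 <= f j) -> (k < n)%nat -> f k <= rsum n f.
Proof. induction n; simpl; intros H Hk. lia.
  assert (0 <= rsum n f) by (apply rsum_nonneg; intros; apply H; lia).
  destruct (Nat.eq_dec k n). subst. assert (0 <= f n) by (apply H; lia). lra.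
  assert (f k <= rsum n f) by (apply IHn; [intros; apply H|]; lia).
  assert (0 <= f n) by (apply H; lia). lra. Qed.

Lemma rsum_plus n f g : rsum n (fun j => f j + g j) = rsum n f + rsum n g.
Proof. induction n; simpl; [lra|rewrite IHn; lra]. Qed.

Lemma rsum_scal n c f : rsum n (fun j => c * f j) = c * rsum n f.
Proof. induction n; simpl; [lra|rewrite IHn; lra]. Qed.

Lemma rsum_ext n f g : (forall j, (j < n)%nat -> f j = g j) -> rsum n f = rsum n g.
Proof. induction n; simpl; intros H. lra. rewrite IHn. rewrite H. lra. lia. intros; apply H; lia. Qed.

Lemma rsum_delta n i a g : (i < n)%nat ->
  rsum n (fun j => (if Nat.eqb i j then a else 0) * g j) = a * g i.
Proof. induction n; simpl; intros Hi. lia.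
  destruct (Nat.eq_dec i n).
  - subst. rewrite Nat.eqb_refl.
    replace (rsum n (fun j => (if Nat.eqb n j then a else 0) * g j)) with (rsum n (fun _ => 0)).
    2:{ apply rsum_ext. intros j Hj. destruct (Nat.eqb_spec n j). lia. lra. }
    assert (Z: forall m, rsum m (fun _ => 0) = 0) by (clear; induction m; simpl; [lra| rewrite IHm; lra]).
    rewrite Z; lra.
  - rewrite IHn by lia. destruct (Nat.eqb_spec i n). lia. lra. Qed.

Lemma By_eq n d B y phi i : (i < n)%nat ->
  mat_vec n (minusD_plus_B d B) y i = phi * y i ->
  rsum n (fun j => B i j * y j) = (phi + d i) * y i.
Proof. intros Hi H. unfold mat_vec, minusD_plus_B in H.
  replace (rsum n (fun j => (B i j - (if Nat.eqb i j then d i else 0)) * y j)) with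
   (rsum n (fun j => B i j * y j) + rsum n (fun j => (-1) * ((if Nat.eqb i j then d i else 0) * y j))) in H.
  rewrite rsum_scal, rsum_delta in H by auto. lra.
  rewrite <- rsum_plus. apply rsum_ext. intros; ring. Qed.

Lemma fin_lower n (a : nat -> R) : (forall i, (i < n)%nat -> 0 < a i) ->
  exists c, 0 < c /\ forall i, (i < n)%nat -> c <= a i.
Proof. induction n; intros H. exists 1; split; [lra|intros; lia].
  destruct IHn as [c [Hc Hc']]. intros; apply H; lia.
  assert (0 < a n) by (apply H; lia).
  exists (Rmin c (a n)); split. apply Rmin_glb_lt; lra.
  intros i Hi. destruct (Nat.eq_dec i n). subst; apply Rmin_r.
  eapply Rle_trans. apply Rmin_l. apply Hc'; lia. Qed.

Lemma fin_argmin n (f : nat -> R) : (0 < n)%nat ->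
  exists i, (i < n)%nat /\ forall j, (j < n)%nat -> f i <= f j.
Proof. induction n; intros H. lia.
  destruct (Nat.eq_dec n 0). subst. exists 0%nat; split; [lia|intros j Hj; replace j with 0%nat by lia; lra].
  destruct IHn as [i [Hi Hi']]. lia.
  destruct (Rle_dec (f i) (f n)).
  exists i; split. lia. intros j Hj. destruct (Nat.eq_dec j n). subst; auto. apply Hi'; lia.
  exists n; split. lia. intros j Hj. destruct (Nat.eq_dec j n). subst; lra. specialize (Hi' j ltac:(lia)). lra. Qed.
Lemma deriv_pos_right f x l : derivable_pt_lim f x l -> 0 < l ->
  exists del, 0 < del /\ forall h, 0 < h < del -> f x < f (x + h).
Proof. intros H Hl. destruct (H l Hl) as [del Hd]. exists del. split. apply cond_pos.
  intros h Hh. assert (h <> 0) by lra. assert (Rabs h < del) by (rewrite Rabs_right; lra).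
  specialize (Hd h H0 H1). apply Rabs_def2 in Hd. destruct Hd as [_ Hd].
  assert (0 < (f (x + h) - f x) / h) by lra.
  assert (0 < (f (x+h) - f x)). { replace (f (x+h) - f x) with ((f (x + h) - f x) / h * h) by (field; lra).
   apply Rmult_lt_0_compat; lra. } lra. Qed.

Lemma deriv_cont_pos f x l : derivable_pt_lim f x l -> 0 < f x ->
  exists del, 0 < del /\ forall s, Rabs (s - x) < del -> 0 < f s.
Proof. intros H Hf.
  assert (C : continuity_pt f x) by (apply derivable_continuous_pt; exists l; exact H).
  destruct (C (f x) Hf) as [del [Hdel Hd]]. exists del; split; auto.
  intros s Hs. destruct (Req_dec s x). subst; auto.
  assert (Q: Rabs (f s - f x) < f x). { apply (Hd s). split. split. exact I. auto. exact Hs. }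
  apply Rabs_def2 in Q. lra. Qed.

Lemma fin_delta n (P : nat -> R -> Prop) :
  (forall i, (i < n)%nat -> exists del, 0 < del /\ forall s, 0 <= s < del -> P i s) ->
  exists del, 0 < del /\ forall i, (i < n)%nat -> forall s, 0 <= s < del -> P i s.
Proof. induction n; intros H. exists 1; split; [lra|intros; lia].
  destruct IHn as [c [Hc Hc']]. intros; apply H; lia.
  destruct (H n ltac:(lia)) as [e [He He']].
  exists (Rmin c e); split. apply Rmin_glb_lt; lra.
  intros i Hi s Hs. assert (Rmin c e <= c) by apply Rmin_l. assert (Rmin c e <= e) by apply Rmin_r.
  destruct (Nat.eq_dec i n). subst; apply He'; lra. apply Hc'; lra || lia. Qed.

Lemma barrier n (g h gd hd : nat -> R -> R) a b : a <= b ->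
  (forall i t, (i < n)%nat -> a <= t <= b -> derivable_pt_lim (g i) t (gd i t)) ->
  (forall i t, (i < n)%nat -> a <= t <= b -> derivable_pt_lim (h i) t (hd i t)) ->
  (forall i, (i < n)%nat -> 0 <= g i a /\ 0 <= h i a) ->
  (forall t, a <= t < b -> (forall j, (j < n)%nat -> 0 <= g j t /\ 0 <= h j t) ->
     forall i, (i < n)%nat -> (g i t = 0 -> 0 < gd i t) /\ (h i t = 0 -> 0 < hd i t)) ->
  forall t, a <= t <= b -> forall i, (i < n)%nat -> 0 <= g i t /\ 0 <= h i t.
Proof.
  intros Hab Dg Dh H0 Hf.
  set (ok := fun s => forall i, (i < n)%nat -> 0 <= g i s /\ 0 <= h i s).
  set (E := fun t => a <= t <= b /\ forall s, a <= s <= t -> ok s).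
  assert (Ea : E a). { split. lra. intros s Hs. replace s with a by lra. exact H0. }
  assert (bE : bound E). { exists b. intros t [Ht _]. lra. }
  destruct (completeness E bE (ex_intro _ a Ea)) as [T [HT1 HT2]].
  assert (aT : a <= T) by (apply HT1; auto).
  assert (Tb : T <= b). { apply HT2. intros t [Ht _]; lra. }
  assert (C1 : forall s, a <= s < T -> ok s).
  { intros s Hs. destruct (classic (exists t, E t /\ s < t)) as [[t [[_ Et] Hst]]|NE].
    apply Et; lra.
    exfalso. assert (is_upper_bound E s). { intros t Et. destruct (Rle_dec t s). auto.
      exfalso; apply NE; exists t; split; auto; lra. }
    specialize (HT2 s H). lra. }
  assert (CL : forall (f fd : R -> R), (forall t, a <= t <= b -> derivable_pt_lim f t (fd t)) ->
     (forall s, a <= s < T -> 0 <= f s) -> a < T -> 0 <= f T).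
  { intros f fd Df Hs ne. 
    - destruct (Rle_dec 0 (f T)) as [|nl]; auto. exfalso.
      assert (D' : derivable_pt_lim (-f)%F T (- fd T)) by (apply derivable_pt_lim_opp, Df; lra).
      destruct (deriv_cont_pos _ _ _ D') as [del [Hdel Hd]]. unfold opp_fct; lra.
      set (s := T - Rmin del (T - a) / 2).
      assert (Rmin del (T-a) <= del) by apply Rmin_l. assert (Rmin del (T-a) <= T - a) by apply Rmin_r.
      assert (0 < Rmin del (T-a)) by (apply Rmin_glb_lt; lra).
      specialize (Hd s). unfold opp_fct in Hd.
      assert (0 <= f s) by (apply Hs; unfold s; lra).
      assert (0 < - f s). apply Hd. unfold s. rewrite Rabs_left; lra. lra. }
  assert (C2 : ok T).
  { destruct (Req_dec T a) as [e|ne]. rewrite e; exact H0.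
    intros i Hi. split.
    - apply (CL (g i) (gd i)). intros; apply Dg; auto. intros s Hs; apply C1; auto. lra.
    - apply (CL (h i) (hd i)). intros; apply Dh; auto. intros s Hs; apply C1; auto. lra. }
  assert (LE : forall (f fd : R -> R), (forall t, a <= t <= b -> derivable_pt_lim f t (fd t)) ->
     T < b -> 0 <= f T -> (f T = 0 -> 0 < fd T) ->
     exists del, 0 < del /\ forall s, 0 <= s < del -> 0 <= f (T + s)).
  { intros f fd Df Tb' HT HTd. destruct (Req_dec (f T) 0) as [e|ne].
    - destruct (deriv_pos_right f T (fd T)) as [del [Hdel Hd]]. apply Df; lra. auto.
      exists del; split; auto. intros s Hs. destruct (Req_dec s 0). subst. rewrite Rplus_0_r; lra.
      specialize (Hd s ltac:(lra)). lra.
    - destruct (deriv_cont_pos f T (fd T)) as [del [Hdel Hd]]. apply Df; lra. lra.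
      exists del; split; auto. intros s Hs. left. apply Hd. replace (T + s - T) with s by ring.
      rewrite Rabs_right; lra. }
  assert (Tb' : T = b).
  { destruct (Req_dec T b); auto. exfalso.
    destruct (fin_delta n (fun i s => 0 <= g i (T + s) /\ 0 <= h i (T + s))) as [del [Hdel Hd]].
    { intros i Hi. destruct (C2 i Hi) as [G1 G2].
      destruct (Hf T ltac:(lra) C2 i Hi) as [F1 F2].
      destruct (LE (g i) (gd i)) as [d1 [Hd1 Hd1']]. intros; apply Dg; auto. lra. auto. auto.
      destruct (LE (h i) (hd i)) as [d2 [Hd2 Hd2']]. intros; apply Dh; auto. lra. auto. auto.
      exists (Rmin d1 d2). split. apply Rmin_glb_lt; lra.
      assert (Rmin d1 d2 <= d1) by apply Rmin_l. assert (Rmin d1 d2 <= d2) by apply Rmin_r.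
      intros s Hs; split; [apply Hd1'|apply Hd2']; lra. }
    set (s := T + Rmin del (b - T) / 2).
    assert (Rmin del (b-T) <= del) by apply Rmin_l. assert (Rmin del (b-T) <= b - T) by apply Rmin_r.
    assert (0 < Rmin del (b-T)) by (apply Rmin_glb_lt; lra).
    assert (E s). { split. unfold s; lra. intros u Hu. destruct (Rlt_dec u T). apply C1; lra.
      intros i Hi. replace u with (T + (u - T)) by ring. apply Hd; auto. unfold s in Hu; lra. }
    specialize (HT1 s H4). unfold s in HT1. lra. }
  intros t Ht. destruct (Req_dec t T). subst; exact C2. apply C1; lra.
Qed.

Lemma dexp c r a t : derivable_pt_lim (fun s => c * exp (r * (s - a))) t (c * r * exp (r * (t - a))).
Proof.
  assert (H1 : derivable_pt_lim (fun s => r * (s - a)) t r).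
  { assert (H0 := derivable_pt_lim_minus id (fct_cte a) t _ _ (derivable_pt_lim_id t) (derivable_pt_lim_const a t)).
    assert (H := derivable_pt_lim_scal _ r _ _ H0). unfold mult_real_fct, minus_fct, id, fct_cte in H.
    replace (r * (1 - 0)) with r in H by ring. exact H. }
  assert (H2 := derivable_pt_lim_comp _ exp t r (exp (r * (t - a))) H1 (derivable_pt_lim_exp _)).
  replace (c * r * exp (r * (t - a))) with (c * (exp (r * (t - a)) * r)) by ring.
  assert (H := derivable_pt_lim_scal _ c _ _ H2). unfold mult_real_fct, comp in H. exact H. Qed.

Lemma dconst c t : derivable_pt_lim (fun _ => c) t 0.
Proof. apply derivable_pt_lim_const. Qed.

Lemma dminus f1 f2 t l1 l2 : derivable_pt_lim f1 t l1 -> derivable_pt_lim f2 t l2 ->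
  derivable_pt_lim (fun s => f1 s - f2 s) t (l1 - l2).
Proof. intros; apply derivable_pt_lim_minus; auto. Qed.

Lemma box n (x : R -> nat -> R) xd (L U Ld Ud : nat -> R -> R) a b : a <= b ->
  (forall i t, (i < n)%nat -> a <= t <= b -> derivable_pt_lim (fun s => x s i) t (xd t i)) ->
  (forall i t, (i < n)%nat -> a <= t <= b -> derivable_pt_lim (L i) t (Ld i t)) ->
  (forall i t, (i < n)%nat -> a <= t <= b -> derivable_pt_lim (U i) t (Ud i t)) ->
  (forall i, (i < n)%nat -> L i a <= x a i <= U i a) ->
  (forall t, a <= t < b -> (forall j, (j < n)%nat -> L j t <= x t j <= U j t) ->
     forall i, (i < n)%nat -> (x t i = L i t -> Ld i t < xd t i) /\ (x t i = U i t -> xd t i < Ud i t)) ->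
  forall t, a <= t <= b -> forall i, (i < n)%nat -> L i t <= x t i <= U i t.
Proof.
  intros Hab Dx DL DU H0 Hf t Ht i Hi.
  assert (K := barrier n (fun i t => x t i - L i t) (fun i t => U i t - x t i)
    (fun i t => xd t i - Ld i t) (fun i t => Ud i t - xd t i) a b Hab).
  destruct (K) with (t := t) (i := i) as [K1 K2]; auto; try lra.
  - intros j u Hj Hu; apply (dminus (fun s => x s j) (L j)); auto.
  - intros j u Hj Hu; apply (dminus (U j) (fun s => x s j)); auto.
  - intros j Hj; specialize (H0 j Hj); lra.
  - intros u Hu Hb j Hj. destruct (Hf u Hu) with (i := j) as [F1 F2]; auto.
    intros k Hk; specialize (Hb k Hk); lra.
    split; intros; [assert (Q := F1 ltac:(lra))|assert (Q := F2 ltac:(lra))]; lra.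
Qed.

Lemma Si_le n (B : nat -> nat -> R) i : (forall i j, (i < n)%nat -> (j < n)%nat -> 0 <= B i j) -> (i < n)%nat ->
  rsum n (fun j => B i j) <= rsum n (fun i => rsum n (fun j => B i j)).
Proof. intros HB Hi. apply (rsum_term n (fun i => rsum n (fun j => B i j))); auto.
  intros; apply rsum_nonneg; auto. Qed.

Lemma Xi_invariant n d B x : (forall i, (i < n)%nat -> 0 < d i) ->
  (forall i j, (i < n)%nat -> (j < n)%nat -> 0 <= B i j) ->
  is_solution n d B x -> in_Xi n (x 0) -> forall t, 0 <= t -> in_Xi n (x t).
Proof.
  intros Hd HB Hs H0 t0 Ht0.
  set (S := rsum n (fun i => rsum n (fun j => B i j))).
  assert (HS : 0 <= S) by (apply rsum_nonneg; intros; apply rsum_nonneg; auto).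
  set (K := 2 * S + 1).
  assert (Main : forall del, 0 < del -> del <= exp (- K * t0) ->
     forall t, 0 <= t <= t0 -> forall i, (i < n)%nat -> - del * exp (K * (t - 0)) <= x t i <= 1).
  { intros del Hdel Hdel2.
    apply (box n x (fun t i => sis_field n d B (x t) i) (fun _ t => - del * exp (K * (t - 0))) (fun _ _ => 1)
       (fun _ t => - del * K * exp (K * (t - 0))) (fun _ _ => 0) 0 t0); auto.
    - intros i t Hi Ht; apply Hs; lra || auto.
    - intros; apply dexp.
    - intros; apply dconst.
    - intros i Hi. replace (K * (0 - 0)) with 0 by ring. rewrite exp_0. specialize (H0 i Hi). lra.
    - intros t Ht Hb i Hi. split; intros Heq.
      + set (eta := del * exp (K * (t - 0))).
        assert (Heta : 0 < eta) by (apply Rmult_lt_0_compat; auto; apply exp_pos).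
        assert (Heta1 : eta <= 1).
        { unfold eta. apply Rle_trans with (exp (- K * t0) * exp (K * t0)).
          assert (exp (K * (t - 0)) <= exp (K * t0)) by (left; apply exp_increasing; unfold K; nra).
          apply Rmult_le_compat; try lra. left; apply exp_pos. rewrite <- exp_plus. replace (- K * t0 + K * t0) with 0 by ring. rewrite exp_0; lra. }
        assert (P : - eta * rsum n (fun j => B i j) <= rsum n (fun j => B i j * x t j)).
        { rewrite <- rsum_scal. apply rsum_le. intros j Hj. specialize (Hb j Hj). assert (- eta <= x t j) by (unfold eta; lra).
          specialize (HB i j Hi Hj). nra. }
        assert (Si := Si_le n B i HB Hi). fold S in Si.
        assert (Hdi := Hd i Hi).
        unfold sis_field. assert (Heq' : x t i = - eta) by (unfold eta; lra). rewrite Heq'.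
        replace (- del * K * exp (K * (t - 0))) with (- K * eta) by (unfold eta; ring).
        assert (0 <= rsum n (fun j => B i j)) by (apply rsum_nonneg; auto).
        assert (- eta * S <= rsum n (fun j => B i j * x t j)) by nra.
        set (PP := rsum n (fun j => B i j * x t j)) in *.
        assert ((1 + eta) * (- eta * S) <= (1 + eta) * PP) by (apply Rmult_le_compat_l; lra).
        assert (eta * eta * S <= eta * S) by (apply Rmult_le_compat_r; nra).
        assert (0 <= d i * eta) by nra.
        unfold K. nra.
      + unfold sis_field. rewrite Heq. specialize (Hd i Hi). lra. }
  intros i Hi.
  assert (Hup : x t0 i <= 1).
  { apply (Main (exp (- K * t0))); auto. apply exp_pos. lra. lra. }
  split; auto.
  destruct (Rle_dec 0 (x t0 i)) as [|Hneg]; auto. exfalso.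
  set (del := Rmin (exp (- K * t0)) (- x t0 i * exp (- K * t0) / 2)).
  assert (0 < del). { apply Rmin_glb_lt. apply exp_pos. assert (0 < exp (-K*t0)) by apply exp_pos. nra. }
  assert (Q := Main del H ltac:(apply Rmin_l) t0 ltac:(lra) i Hi).
  assert (del * exp (K * (t0 - 0)) <= - x t0 i / 2).
  { apply Rle_trans with (- x t0 i * exp (- K * t0) / 2 * exp (K * (t0 - 0))).
    apply Rmult_le_compat_r. left; apply exp_pos. apply Rmin_r.
    rewrite Rminus_0_r.
    replace (- x t0 i * exp (- K * t0) / 2 * exp (K * t0)) with
      (- x t0 i / 2 * (exp (- K * t0) * exp (K * t0))) by field.
    rewrite <- exp_plus. replace (- K * t0 + K * t0) with 0 by ring. rewrite exp_0; lra. }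
  lra.
Qed.

Lemma pos_persist n d B x i s : (forall i, (i < n)%nat -> 0 < d i) ->
  (forall i j, (i < n)%nat -> (j < n)%nat -> 0 <= B i j) ->
  is_solution n d B x -> (forall t, 0 <= t -> in_Xi n (x t)) -> (i < n)%nat ->
  0 <= s -> 0 < x s i -> forall t, s <= t -> 0 < x t i.
Proof.
  intros Hd HB Hs HX Hi Hs0 Hp t Ht.
  set (L := fun u => x s i / 2 * exp (-2 * d i * (u - s))).
  assert (HL : forall u, 0 < L u) by (intros; unfold L; apply Rmult_lt_0_compat; [lra|apply exp_pos]).
  cut (L t <= x t i). specialize (HL t); lra.
  destruct (barrier 1 (fun _ u => x u i - L u) (fun _ _ => 1)
     (fun _ u => sis_field n d B (x u) i - x s i / 2 * (-2 * d i) * exp (-2 * d i * (u - s))) (fun _ _ => 0) s t Ht)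
    with (t := t) (i := 0%nat) as [G _]; try lra; try lia.
  - intros k u _ Hu. apply dminus. apply Hs; lra || auto. apply dexp.
  - intros; apply dconst.
  - intros. unfold L. replace (s - s) with 0 by ring. rewrite Rmult_0_r, exp_0. lra.
  - intros u Hu _ k _. split; [|lra]. intros Heq.
    assert (Xu := HX u ltac:(lra) i Hi).
    assert (P : 0 <= rsum n (fun j => B i j * x u j)).
    { apply rsum_nonneg. intros j Hj. assert (Q := HX u ltac:(lra) j Hj). specialize (HB i j Hi Hj). nra. }
    assert (Hxi : x u i = L u) by lra.
    unfold sis_field. rewrite Hxi. specialize (HL u). assert (Hdi := Hd i Hi).
    replace (x s i / 2 * (-2 * d i) * exp (-2 * d i * (u - s))) with (-2 * d i * L u) by (unfold L; field).
    assert (0 <= (1 - L u) * rsum n (fun j => B i j * x u j)) by (apply Rmult_le_pos; lra).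
    nra.
Qed.

Lemma edge_pos n d B x i j : (forall i, (i < n)%nat -> 0 < d i) ->
  (forall i j, (i < n)%nat -> (j < n)%nat -> 0 <= B i j) ->
  is_solution n d B x -> (forall t, 0 <= t -> in_Xi n (x t)) -> (i < n)%nat -> (j < n)%nat ->
  0 < B i j -> (forall t, 0 < t -> 0 < x t j) -> forall t, 0 < t -> 0 < x t i.
Proof.
  intros Hd HB Hs HX Hi Hj Bij Hxj t Ht.
  destruct (Rlt_dec 0 (x t i)) as [|Hn]; auto. exfalso.
  assert (Z : forall s, 0 <= s <= t -> x s i = 0).
  { intros s Hs0. destruct (Rlt_dec 0 (x s i)).
    assert (0 < x t i) by (apply (pos_persist n d B x i s); auto; lra). lra.
    specialize (HX s ltac:(lra) i Hi). lra. }
  set (s := t / 2).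
  assert (D := Hs s ltac:(unfold s; lra) i Hi).
  destruct (deriv_pos_right _ _ _ D) as [del [Hdel Hd']].
  - unfold sis_field. rewrite (Z s) by (unfold s; lra).
    assert (Q : B i j * x s j <= rsum n (fun k => B i k * x s k)).
    { apply (rsum_term n (fun k => B i k * x s k)); auto. intros k Hk.
      assert (W := HX s ltac:(unfold s; lra) k Hk). specialize (HB i k Hi Hk). nra. }
    assert (0 < x s j) by (apply Hxj; unfold s; lra).
    assert (0 < B i j * x s j) by (apply Rmult_lt_0_compat; auto). nra.
  - set (h := Rmin del (t / 2) / 2).
    assert (Rmin del (t/2) <= del) by apply Rmin_l. assert (Rmin del (t/2) <= t/2) by apply Rmin_r.
    assert (0 < Rmin del (t/2)) by (apply Rmin_glb_lt; lra).
    specialize (Hd' h ltac:(unfold h; lra)). rewrite (Z s), (Z (s + h)) in Hd'; unfold s, h in *; lra.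
Qed.

Lemma reach_pos n d B x : (forall i, (i < n)%nat -> 0 < d i) ->
  (forall i j, (i < n)%nat -> (j < n)%nat -> 0 <= B i j) ->
  is_solution n d B x -> (forall t, 0 <= t -> in_Xi n (x t)) ->
  forall j i, reach n B j i -> (forall t, 0 < t -> 0 < x t j) -> forall t, 0 < t -> 0 < x t i.
Proof.
  intros Hd HB Hs HX j i R. induction R as [j i Hj Hi Bne|j k i R1 IH1 R2 IH2].
  - intros H. apply (edge_pos n d B x i j); auto. specialize (HB i j Hi Hj). lra.
  - intros H. apply IH2, IH1, H.
Qed.

Lemma reach_zero n B x : (forall i j, (i < n)%nat -> (j < n)%nat -> 0 <= B i j) ->
  in_Xi n x -> (forall i, (i < n)%nat -> x i = 0 -> rsum n (fun j => B i j * x j) = 0) ->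
  forall j i, reach n B j i -> x i = 0 -> x j = 0.
Proof.
  intros HB HX HZ j i R. induction R as [j i Hj Hi Bne|j k i R1 IH1 R2 IH2].
  - intros H. specialize (HZ i Hi H).
    assert (Q : B i j * x j <= rsum n (fun k => B i k * x k)).
    { apply (rsum_term n (fun k => B i k * x k)); auto. intros k Hk.
      specialize (HX k Hk). specialize (HB i k Hi Hk). nra. }
    specialize (HX j Hj). specialize (HB i j Hi Hj).
    assert (0 <= B i j * x j) by nra.
    assert (B i j * x j = 0) by lra. apply Rmult_integral in H1. destruct H1; [contradiction|auto].
  - intros H; auto.
Qed.

Lemma face_low n d B y phi i c x : (i < n)%nat -> 0 < d i ->
  (forall j, (j < n)%nat -> 0 <= B i j) ->
  rsum n (fun j => B i j * y j) = (phi + d i) * y i -> 0 < y i <= 1 -> 0 < phi ->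
  0 < c -> c * (phi + d i) <= phi / 2 ->
  (forall j, (j < n)%nat -> c * y j <= x j) -> x i = c * y i ->
  c * y i * phi / 2 <= sis_field n d B x i.
Proof.
  intros Hi Hdi HB HBy Hy Hphi Hc Hc2 Hx Hxi.
  assert (P : c * ((phi + d i) * y i) <= rsum n (fun j => B i j * x j)).
  { rewrite <- HBy, <- rsum_scal. apply rsum_le. intros j Hj. specialize (Hx j Hj). specialize (HB j Hj). nra. }
  unfold sis_field. rewrite Hxi.
  set (PP := rsum n (fun j => B i j * x j)) in *.
  assert (Hcy : c * y i <= 1/2) by nra.
  assert ((1 - c * y i) * (c * ((phi + d i) * y i)) <= (1 - c * y i) * PP) by (apply Rmult_le_compat_l; lra).
  assert (c * y i * (c * y i * (phi + d i)) <= c * y i * (c * (phi + d i))).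
  { apply Rmult_le_compat_l. nra. apply Rmult_le_compat_r; nra. }
  assert (c * y i * (c * (phi + d i)) <= c * y i * (phi / 2)) by (apply Rmult_le_compat_l; nra).
  nra.
Qed.

Lemma nonzero_ex n (x : nat -> R) : ~ is_zero_vec n x -> exists k, (k < n)%nat /\ x k <> 0.
Proof. intros H. apply NNPP. intros N. apply H. intros i Hi. apply NNPP. intros Ne. apply N. exists i; auto. Qed.

Lemma exp_le a b : a <= b -> exp a <= exp b.
Proof. intros H. destruct (Req_dec a b). subst; lra. left; apply exp_increasing; lra. Qed.

Theorem lemma4 (n : nat) (d : nat -> R) (B : nat -> nat -> R) (phi : R) (y : nat -> R)
  (Hn : (2 <= n)%nat)
  (Hd : forall i, (i < n)%nat -> 0 < d i)
  (HB : forall i j, (i < n)%nat -> (j < n)%nat -> 0 <= B i j)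
  (Hirr : irreducible n B)
  (Hphi : spectral_abscissa n (minusD_plus_B d B) phi)
  (Hphipos : 0 < phi)
  (Hypos : forall i, (i < n)%nat -> 0 < y i)
  (Hyeig : forall i, (i < n)%nat -> mat_vec n (minusD_plus_B d B) y i = phi * y i)
  (Hymax : (exists i, (i < n)%nat /\ y i = 1) /\ (forall i, (i < n)%nat -> y i <= 1)) :
  exists eps : R, 0 < eps < 1 /\
    (* (i) *)
    (pos_invariant n d B (in_M n eps y) /\ pos_invariant n d B (in_int_M n eps y)) /\
    (* (ii) *)
    (forall i, (i < n)%nat ->
       (forall x, in_P n eps y i x -> - sis_field n d B x i < 0) /\
       (forall x, in_Q n eps y i x -> sis_field n d B x i < 0)) /\
    (* (iii) *)
    (forall x : R -> nat -> R, is_solution n d B x ->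
       in_boundary_Xi n (x 0) -> ~ is_zero_vec n (x 0) ->
       exists kappa, 0 < kappa /\ in_M n eps y (x kappa)) /\
    (* (iv) *)
    (forall x : nat -> R, in_Xi n x -> ~ is_zero_vec n x ->
       (forall i, (i < n)%nat -> sis_field n d B x i = 0) ->
       in_int_M n eps y x).
Proof.
  destruct Hymax as [_ Hy1].
  set (D := rsum n d).
  assert (HdD : forall i, (i < n)%nat -> d i <= D).
  { intros i Hi. apply (rsum_term n d); auto. intros; left; auto. }
  assert (HD : 0 <= D) by (apply rsum_nonneg; intros; left; auto).
  set (eps := phi / (4 * (phi + D))).
  assert (Heps : 0 < eps) by (unfold eps; apply Rdiv_lt_0_compat; lra).
  assert (Heps2 : 2 * eps * (phi + D) = phi / 2) by (unfold eps; field; lra).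
  assert (Heps1 : eps < 1).
  { assert (eps * (phi + D) < 1 * (phi + D)) by lra. nra. }
  assert (Hc : forall c, 0 < c <= 2 * eps -> forall i, (i < n)%nat -> c * (phi + d i) <= phi / 2).
  { intros c Hc i Hi. specialize (HdD i Hi). nra. }
  assert (HBy : forall i, (i < n)%nat -> rsum n (fun j => B i j * y j) = (phi + d i) * y i).
  { intros i Hi. apply (By_eq n d B y phi i Hi (Hyeig i Hi)). }
  assert (FL : forall c, 0 < c <= 2 * eps -> forall i, (i < n)%nat -> forall x : nat -> R,
     (forall j, (j < n)%nat -> c * y j <= x j) -> x i = c * y i -> c * y i * phi / 2 <= sis_field n d B x i).
  { intros c Hc' i Hi x Hx Hxi. refine (face_low n d B y phi i c x Hi (Hd i Hi) _ (HBy i Hi) _ Hphipos _ (Hc c Hc' i Hi) Hx Hxi).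
    intros; apply HB; auto. split; [apply Hypos|apply Hy1]; auto. lra. }
  assert (FU : forall i (x : nat -> R), x i = 1 -> sis_field n d B x i = - d i).
  { intros i x H. unfold sis_field. rewrite H. ring. }
  exists eps. split; [lra|].
  split; [split|split; [|split]].
  -
    intros x Hs H0 t Ht i0 Hi0.
    apply (box n x (fun u i => sis_field n d B (x u) i) (fun i _ => eps * y i) (fun _ _ => 1)
       (fun _ _ => 0) (fun _ _ => 0) 0 t) with (t := t); auto; try lra.
    + intros i u Hi Hu; apply Hs; lra || auto.
    + intros; apply dconst.
    + intros; apply dconst.
    + intros u Hu Hb i Hi. split; intros Heq.
      * assert (Q := FL eps ltac:(lra) i Hi (x u) ltac:(intros j Hj; apply Hb; auto) Heq).
        assert (0 < eps * y i * phi / 2). { specialize (Hypos i Hi).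
          assert (0 < eps * y i * phi) by (apply Rmult_lt_0_compat; [apply Rmult_lt_0_compat|]; auto). lra. } lra.
      * rewrite FU; auto. specialize (Hd i Hi); lra.
  -
    intros x Hs H0 t Ht.
    destruct (fin_lower n (fun i => Rmin (x 0 i - eps * y i) (1 - x 0 i))) as [c0 [Hc0 Hc0']].
    { intros i Hi. specialize (H0 i Hi). apply Rmin_glb_lt; lra. }
    destruct (fin_lower n d Hd) as [dm [Hdm Hdm']].
    set (S := rsum n (fun i => rsum n (fun j => B i j))).
    assert (HS : 0 <= S) by (apply rsum_nonneg; intros; apply rsum_nonneg; auto).
    set (e1 := eps + Rmin c0 eps / 2).
    set (eta := Rmin (c0 / 2) (Rmin (1 / 2) (dm / (2 * (S + 1))))).
    assert (Hm1 : Rmin c0 eps <= c0) by apply Rmin_l. assert (Hm2 : Rmin c0 eps <= eps) by apply Rmin_r.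
    assert (Hm3 : 0 < Rmin c0 eps) by (apply Rmin_glb_lt; lra).
    assert (He1 : eta <= c0 / 2) by apply Rmin_l.
    assert (He2 : eta <= 1 / 2) by (eapply Rle_trans; [apply Rmin_r|apply Rmin_l]).
    assert (He3 : eta <= dm / (2 * (S + 1))) by (eapply Rle_trans; [apply Rmin_r|apply Rmin_r]).
    assert (He0 : 0 < eta).
    { apply Rmin_glb_lt. lra. apply Rmin_glb_lt. lra. apply Rdiv_lt_0_compat; lra. }
    assert (HetaS : eta * S < dm / 2).
    { apply Rle_lt_trans with (dm / (2 * (S + 1)) * S). apply Rmult_le_compat_r; auto.
      replace (dm / (2 * (S + 1)) * S) with (dm / 2 * (S / (S + 1))) by (field; lra).
      assert (S / (S + 1) < 1). { apply (Rmult_lt_reg_r (S + 1)). lra. 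
        replace (S / (S + 1) * (S + 1)) with S by (field; lra). lra. }
      nra. }
    assert (Box : forall i, (i < n)%nat -> e1 * y i <= x t i <= 1 - eta).
    { intros i0 Hi0.
      apply (box n x (fun u i => sis_field n d B (x u) i) (fun i _ => e1 * y i) (fun _ _ => 1 - eta)
         (fun _ _ => 0) (fun _ _ => 0) 0 t) with (t := t); auto; try lra.
      + intros i u Hi Hu; apply Hs; lra || auto.
      + intros; apply dconst.
      + intros; apply dconst.
      + intros i Hi. specialize (Hc0' i Hi). simpl in Hc0'.
        assert (Rmin (x 0 i - eps * y i) (1 - x 0 i) <= x 0 i - eps * y i) by apply Rmin_l.
        assert (Rmin (x 0 i - eps * y i) (1 - x 0 i) <= 1 - x 0 i) by apply Rmin_r.
        specialize (Hy1 i Hi). specialize (Hypos i Hi). unfold e1.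
        assert (Rmin c0 eps / 2 * y i <= c0 / 2) by nra. nra.
      + intros u Hu Hb i Hi. split; intros Heq.
        * assert (Q := FL e1 ltac:(unfold e1; lra) i Hi (x u) ltac:(intros j Hj; apply Hb; auto) Heq).
          assert (0 < e1 * y i * phi / 2). { specialize (Hypos i Hi). assert (0 < e1) by (unfold e1; lra).
            assert (0 < e1 * y i * phi) by (apply Rmult_lt_0_compat; [apply Rmult_lt_0_compat|]; auto). lra. } lra.
        * unfold sis_field. rewrite Heq.
          assert (P : rsum n (fun j => B i j * x u j) <= S).
          { apply Rle_trans with (rsum n (fun j => B i j)). apply rsum_le. intros j Hj.
            specialize (Hb j Hj). specialize (HB i j Hi Hj). nra. apply Si_le; auto. }
          assert (P0 : 0 <= rsum n (fun j => B i j * x u j)).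
          { apply rsum_nonneg. intros j Hj. specialize (Hb j Hj). specialize (HB i j Hi Hj).
            specialize (Hypos j Hj). assert (0 < e1) by (unfold e1; lra). assert (0 <= e1 * y j) by (apply Rmult_le_pos; lra). nra. }
          specialize (Hdm' i Hi). specialize (Hd i Hi).
          assert (eta * rsum n (fun j => B i j * x u j) <= eta * S) by (apply Rmult_le_compat_l; lra).
          replace (1 - (1 - eta)) with eta by ring. nra. }
    intros i Hi. specialize (Box i Hi). specialize (Hypos i Hi). unfold e1 in Box. split; nra.
  -
    intros i Hi. split.
    + intros x [Hxi Hx].
      assert (Q := FL eps ltac:(lra) i Hi x).
      assert (eps * y i * phi / 2 <= sis_field n d B x i).
      { apply Q; auto. intros j Hj. destruct (Nat.eq_dec j i). subst; lra. apply Hx; auto. }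
      assert (0 < eps * y i * phi / 2). { specialize (Hypos i Hi).
          assert (0 < eps * y i * phi) by (apply Rmult_lt_0_compat; [apply Rmult_lt_0_compat|]; auto). lra. } lra.
    + intros x [Hxi _]. rewrite FU; auto. specialize (Hd i Hi); lra.
  -
    intros x Hs [H0 _] Hnz.
    assert (HX := Xi_invariant n d B x Hd HB Hs H0).
    destruct (nonzero_ex n (x 0) Hnz) as [k [Hk Hxk]].
    assert (Hk0 : 0 < x 0 k) by (specialize (H0 k Hk); lra).
    assert (Pk : forall t, 0 < t -> 0 < x t k).
    { intros t Ht. apply (pos_persist n d B x k 0); auto; lra. }
    assert (Pall : forall i, (i < n)%nat -> forall t, 0 < t -> 0 < x t i).
    { intros i Hi. destruct (Nat.eq_dec i k). subst; auto.
      apply (reach_pos n d B x Hd HB Hs HX k i); auto. }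
    destruct (fin_lower n (fun i => x 1 i)) as [c1 [Hc1 Hc1']].
    { intros i Hi; apply Pall; auto; lra. }
    set (c0 := Rmin c1 eps).
    assert (c0 <= c1) by apply Rmin_l. assert (c0 <= eps) by apply Rmin_r.
    assert (Hc0 : 0 < c0) by (apply Rmin_glb_lt; lra).
    set (r := phi / 4).
    assert (Hr : 0 < r) by (unfold r; lra).
    assert (Hq : 1 < 2 * eps / c0).
    { apply (Rmult_lt_reg_r c0); auto. replace (2 * eps / c0 * c0) with (2 * eps) by (field; lra). lra. }
    set (T := 1 + ln (2 * eps / c0) / r).
    assert (Hln : 0 < ln (2 * eps / c0)) by (rewrite <- ln_1; apply ln_increasing; lra).
    assert (HT : 1 <= T) by (unfold T; assert (0 < ln (2 * eps / c0) / r) by (apply Rdiv_lt_0_compat; auto); lra).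
    assert (HexpT : exp (r * (T - 1)) = 2 * eps / c0).
    { unfold T. replace (r * (1 + ln (2 * eps / c0) / r - 1)) with (ln (2 * eps / c0)) by (field; lra).
      apply exp_ln; lra. }
    assert (Box : forall i, (i < n)%nat -> c0 / 2 * y i * exp (r * (T - 1)) <= x T i <= 2).
    { intros i0 Hi0.
      apply (box n x (fun u i => sis_field n d B (x u) i) (fun i u => c0 / 2 * y i * exp (r * (u - 1))) (fun _ _ => 2)
         (fun i u => c0 / 2 * y i * r * exp (r * (u - 1))) (fun _ _ => 0) 1 T) with (t := T); auto; try lra.
      + intros i u Hi Hu; apply Hs; lra || auto.
      + intros; apply dexp.
      + intros; apply dconst.
      + intros i Hi. replace (r * (1 - 1)) with 0 by ring. rewrite exp_0.
        specialize (Hc1' i Hi). specialize (Hy1 i Hi). specialize (Hypos i Hi).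
        assert (HX1 := HX 1 ltac:(lra) i Hi). simpl in Hc1'. nra.
      + intros u Hu Hb i Hi. split; intros Heq.
        * set (cu := c0 / 2 * exp (r * (u - 1))).
          assert (Hcu0 : 0 < cu) by (unfold cu; apply Rmult_lt_0_compat; [lra|apply exp_pos]).
          assert (Hcu : cu <= eps).
          { unfold cu. assert (EE : exp (r * (u - 1)) <= exp (r * (T - 1))) by (apply exp_le; nra).
            rewrite HexpT in EE. 
            apply Rle_trans with (c0 / 2 * (2 * eps / c0)). apply Rmult_le_compat_l; lra.
            right; field; lra. }
          assert (Q := FL cu ltac:(lra) i Hi (x u)).
          assert (cu * y i * phi / 2 <= sis_field n d B (x u) i).
          { apply Q. intros j Hj. specialize (Hb j Hj). unfold cu. lra. unfold cu. lra. }
          specialize (Hypos i Hi).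
          replace (c0 / 2 * y i * r * exp (r * (u - 1))) with (cu * y i * (phi / 4)) by (unfold cu, r; field).
          assert (0 < cu * y i * phi) by (apply Rmult_lt_0_compat; [apply Rmult_lt_0_compat|]; auto). lra.
        * specialize (HX u ltac:(lra) i Hi). lra. }
    exists T. split. lra.
    intros i Hi. specialize (Box i Hi). rewrite HexpT in Box. specialize (HX T ltac:(lra) i Hi).
    split; [|lra]. replace (c0 / 2 * y i * (2 * eps / c0)) with (eps * y i) in Box by (field; lra). lra.
  -
    intros x HX Hnz Heq.
    destruct (nonzero_ex n x Hnz) as [k [Hk Hxk]].
    assert (Hpos : forall i, (i < n)%nat -> 0 < x i).
    { intros i Hi. destruct (Rlt_dec 0 (x i)) as [|Hn0]; auto. exfalso.
      assert (Hx0 : x i = 0) by (specialize (HX i Hi); lra).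
      destruct (Nat.eq_dec i k). subst; contradiction.
      apply Hxk. apply (reach_zero n B x HB HX) with (i := i); auto.
      intros m Hm Hxm. specialize (Heq m Hm). unfold sis_field in Heq. rewrite Hxm in Heq. lra. }
    destruct (fin_argmin n (fun j => x j / y j) ltac:(lia)) as [m [Hm Hmin]].
    set (c := x m / y m).
    assert (Hym := Hypos m Hm). assert (Hxm := Hpos m Hm).
    assert (Hcpos : 0 < c) by (unfold c; apply Rdiv_lt_0_compat; auto).
    assert (Hcx : forall j, (j < n)%nat -> c * y j <= x j).
    { intros j Hj. specialize (Hmin j Hj). simpl in Hmin. fold c in Hmin. assert (Hyj := Hypos j Hj).
      apply Rmult_le_compat_r with (r := y j) in Hmin; [|lra].
      replace (x j / y j * y j) with (x j) in Hmin by (field; lra). lra. }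
    assert (Hxmc : x m = c * y m) by (unfold c; field; lra).
    assert (P : c * ((phi + d m) * y m) <= rsum n (fun j => B m j * x j)).
    { rewrite <- HBy, <- rsum_scal by auto. apply rsum_le. intros j Hj. specialize (Hcx j Hj).
      specialize (HB m j Hm Hj). nra. }
    assert (E := Heq m Hm). unfold sis_field in E. rewrite Hxmc in E.
    set (PP := rsum n (fun j => B m j * x j)) in *.
    assert (Hxm1 : c * y m <= 1) by (rewrite <- Hxmc; apply HX; auto).
    assert ((1 - c * y m) * (c * ((phi + d m) * y m)) <= (1 - c * y m) * PP) by (apply Rmult_le_compat_l; lra).
    assert (Hdm := Hd m Hm).
    (* d m * c * y m >= (1 - c y m) c (phi + d m) y m  => d m >= (1 - c y m)(phi + d m) *)
    assert (Q : c * y m * (d m - (1 - c * y m) * (phi + d m)) >= 0) by nra.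
    assert (Q2 : d m - (1 - c * y m) * (phi + d m) >= 0).
    { destruct (Rlt_dec (d m - (1 - c * y m) * (phi + d m)) 0); [|lra].
      assert (0 < c * y m) by (apply Rmult_lt_0_compat; auto). nra. }
    assert (Q3 : phi <= c * (phi + d m)).
    { specialize (Hy1 m Hm). nra. }
    assert (Hepsc : eps < c).
    { assert (eps * (phi + d m) <= phi / 4).
      { specialize (HdD m Hm). unfold eps. 
        assert (eps * (phi + D) = phi / 4) by (unfold eps; field; lra). unfold eps in H0. nra. }
      nra. }
    intros i Hi. split.
    + specialize (Hcx i Hi). specialize (Hypos i Hi). nra.
    + specialize (HX i Hi). destruct (Req_dec (x i) 1) as [e|ne]; [|lra].
      specialize (Heq i Hi). rewrite FU in Heq; auto. specialize (Hd i Hi). lra.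
Qed.
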